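(* For the discrete nonlinear Schrödinger system $$u_{1,0}-u_{0,1}-\frac{\alpha-\beta}{1+u_{0,0}v_{1,1}}\,u_{0,0}=0,\qquad v_{1,0}-v_{0,1}+\frac{\alpha-\beta}{1+u_{0,0}v_{1,1}}\,v_{1,1}=0,$$ the following is a symmetry: $$\frac{\partial u_{0,0}}{\partial t_1}=\frac{u_{-1,0}}{1+u_{-1,0}v_{1,0}},\qquad \frac{\partial v_{0,0}}{\partial t_1}=\frac{-v_{1,0}}{1+u_{-1,0}v_{1,0}},$$ and the following is an extended symmetry: $$\frac{\partial u_{0,0}}{\partial \tau}=\frac{n\,u_{-1,0}}{1+u_{-1,0}v_{1,0}},\qquad \frac{\partial v_{0,0}}{\partial \tau}=\frac{-n\,v_{1,0}}{1+u_{-1,0}v_{1,0}},\qquad \frac{\partial\alpha}{\partial\tau}=1.$$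
   Context: Unknowns $u,v$ on $\mathbb Z^2$, $u_{i,j}=u(n+i,m+j)$, similarly $v$; $\alpha\neq\beta$ constants. Shifts $\mathcal S:n\mapsto n+1$, $\mathcal T:m\mapsto m+1$. For a system $\boldsymbol Q(\boldsymbol u_{0,0},\boldsymbol u_{1,0},\boldsymbol u_{0,1},\boldsymbol u_{1,1};\alpha)=\boldsymbol 0$ with $\boldsymbol u=(u,v)$ and Jacobians $\mathrm Q_{(p,q)}=\partial\boldsymbol Q/\partial\boldsymbol u_{p,q}$: $\boldsymbol F(n,m,[\boldsymbol u])$ is a symmetry ($\partial_t\boldsymbol u_{0,0}=\boldsymbol F$) if $\mathrm Q_{(0,0)}\boldsymbol F+\mathrm Q_{(1,0)}\mathcal S(\boldsymbol F)+\mathrm Q_{(0,1)}\mathcal T(\boldsymbol F)+\mathrm Q_{(1,1)}\mathcal S\mathcal T(\boldsymbol F)=\boldsymbol 0$ on all solutions; $(\boldsymbol M,\xi)$ is an extended symmetry ($\partial_\tau\boldsymbol u_{0,0}=\boldsymbol M$, $\partial_\tau\alpha=\xi$) if $\mathrm Q_{(0,0)}\boldsymbol M+\mathrm Q_{(1,0)}\mathcal S(\boldsymbol M)+\mathrm Q_{(0,1)}\mathcal T(\boldsymbol M)+\mathrm Q_{(1,1)}\mathcal S\mathcal T(\boldsymbol M)+\xi\,\partial_\alpha\boldsymbol Q=\boldsymbol 0$ on all solutions. Here $\mathcal S^p\mathcal T^q(\boldsymbol F)$ is $\boldsymbol F$ with $n\to n+p$, $m\to m+q$ and all shifts of $\boldsymbol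 u$ shifted accordingly. *)

(* Defs.v *)
From Stdlib Require Import Reals ZArith.
From Coquelicot Require Import Coquelicot.
Open Scope R_scope.

(** Lattice fields: u(n,m), with u_{i,j} = u (n+i) (m+j). *)
Definition field := Z -> Z -> R.

(** A component of a quad-equation system Q(u00,u10,u01,u11; alpha), with
    u = (u,v):  arguments are alpha, then (u,v) at (0,0),(1,0),(0,1),(1,1). *)
Definition quad := R -> R -> R -> R -> R -> R -> R -> R -> R -> R.

Definition NLS_Q1 (beta : R) : quad :=
  fun alpha u00 v00 u10 v10 u01 v01 u11 v11 =>
    u10 - u01 - (alpha - beta) / (1 + u00 * v11) * u00.
Definition NLS_Q2 (beta : R) : quad :=
  fun alpha u00 v00 u10 v10 u01 v01 u11 v11 =>
    v10 - v01 + (alpha - beta) / (1 + u00 * v11) * v11.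

Definition nls_solution (alpha beta : R) (u v : field) : Prop :=
  forall n m : Z,
    1 + u n m * v (n + 1)%Z (m + 1)%Z <> 0 /\
    NLS_Q1 beta alpha (u n m) (v n m) (u (n+1)%Z m) (v (n+1)%Z m)
      (u n (m+1)%Z) (v n (m+1)%Z) (u (n+1)%Z (m+1)%Z) (v (n+1)%Z (m+1)%Z) = 0 /\
    NLS_Q2 beta alpha (u n m) (v n m) (u (n+1)%Z m) (v (n+1)%Z m)
      (u n (m+1)%Z) (v n (m+1)%Z) (u (n+1)%Z (m+1)%Z) (v (n+1)%Z (m+1)%Z) = 0.

(** A component of a characteristic F(n,m,[u]): given the fields and the point
    (n,m), its value.  S^p T^q F is this function evaluated at (n+p,m+q). *)
Definition charac := field -> field -> Z -> Z -> R.

(** e |-> Q(u + e*F, shifted accordingly; alpha + e*xi), at the point (n,m).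
    Its derivative at e = 0 is
    Q_(0,0) F + Q_(1,0) S F + Q_(0,1) T F + Q_(1,1) S T F + xi dQ/dalpha. *)
Definition lin_curve (Q : quad) (alpha xi : R) (u v : field) (Fu Fv : charac)
    (n m : Z) : R -> R :=
  fun e =>
    Q (alpha + e * xi)
      (u n m + e * Fu u v n m) (v n m + e * Fv u v n m)
      (u (n+1)%Z m + e * Fu u v (n+1)%Z m) (v (n+1)%Z m + e * Fv u v (n+1)%Z m)
      (u n (m+1)%Z + e * Fu u v n (m+1)%Z) (v n (m+1)%Z + e * Fv u v n (m+1)%Z)
      (u (n+1)%Z (m+1)%Z + e * Fu u v (n+1)%Z (m+1)%Z)
      (v (n+1)%Z (m+1)%Z + e * Fv u v (n+1)%Z (m+1)%Z).

(** (Mu,Mv; xi) is an extended symmetry of the NLS system on all solutions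
    satisfying the domain condition D (where the characteristic is defined). *)
Definition nls_ext_symmetry (alpha beta : R) (D : field -> field -> Prop)
    (Mu Mv : charac) (xi : R) : Prop :=
  forall u v : field, nls_solution alpha beta u v -> D u v ->
  forall n m : Z,
    is_derive (lin_curve (NLS_Q1 beta) alpha xi u v Mu Mv n m) 0 0 /\
    is_derive (lin_curve (NLS_Q2 beta) alpha xi u v Mu Mv n m) 0 0.

Definition nls_symmetry (alpha beta : R) (D : field -> field -> Prop)
    (Fu Fv : charac) : Prop :=
  forall u v : field, nls_solution alpha beta u v -> D u v ->
  forall n m : Z,
    is_derive (fun e => lin_curve (NLS_Q1 beta) alpha 0 u v Fu Fv n m e) 0 0 /\
    is_derive (fun e => lin_curve (NLS_Q2 beta) alpha 0 u v Fu Fv n m e) 0 0.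

Definition sym_domain (u v : field) : Prop :=
  forall n m : Z, 1 + u (n - 1)%Z m * v (n + 1)%Z m <> 0.

Definition F1u : charac := fun u v n m =>
  u (n - 1)%Z m / (1 + u (n - 1)%Z m * v (n + 1)%Z m).
Definition F1v : charac := fun u v n m =>
  - v (n + 1)%Z m / (1 + u (n - 1)%Z m * v (n + 1)%Z m).

Definition Mu : charac := fun u v n m =>
  IZR n * u (n - 1)%Z m / (1 + u (n - 1)%Z m * v (n + 1)%Z m).
Definition Mv : charac := fun u v n m =>
  - (IZR n * v (n + 1)%Z m) / (1 + u (n - 1)%Z m * v (n + 1)%Z m).

(* Main.v *)
Require Import Defs.
From Stdlib Require Import Reals ZArith Lra.
From Coquelicot Require Import Coquelicot.
Open Scope R_scope.

Lemma zs1 n : (n + 1 - 1 = n)%Z. Proof. ring. Qed.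
Lemma zs2 n : (n - 1 + 1 = n)%Z. Proof. ring. Qed.
Lemma zs3 n : (n + 1 + 1 = n + 2)%Z. Proof. ring. Qed.

Ltac nz := match goal with |- ?X <> 0 => match goal with G: ?Y <> 0, Dd: ?Z <> 0 |- _ => let H := fresh in intro H; apply G; replace Y with (X / Z) by (field; repeat split; assumption); rewrite H; unfold Rdiv; ring end end.

Ltac solve_all alpha beta u v Hs Hd n m :=
destruct (Hs (n-1)%Z m) as [D0 [A0 B0]];
destruct (Hs n m) as [D1 [A1 B1]];
destruct (Hs (n+1)%Z m) as [D2 [A2 B2]];
pose proof (Hd n m) as G0; pose proof (Hd (n+1)%Z m) as G1;
pose proof (Hd n (m+1)%Z) as G2; pose proof (Hd (n+1)%Z (m+1)%Z) as G3;
unfold lin_curve, NLS_Q1, NLS_Q2, F1u, F1v, Mu, Mv in *;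
rewrite ?zs1, ?zs2, ?zs3 in *;
rewrite ?plus_IZR;
assert (Er0: u (n-1)%Z (m+1)%Z = u n m - (alpha-beta)/(1+u (n-1)%Z m * v n (m+1)%Z)* u (n-1)%Z m) by lra;
assert (Er1: u n (m+1)%Z = u (n+1)%Z m - (alpha-beta)/(1+u n m * v (n+1)%Z (m+1)%Z)* u n m) by lra;
assert (Es1: v (n+1)%Z m = v n (m+1)%Z - (alpha-beta)/(1+u n m * v (n+1)%Z (m+1)%Z)* v (n+1)%Z (m+1)%Z) by lra;
assert (Es2: v (n+2)%Z m = v (n+1)%Z (m+1)%Z - (alpha-beta)/(1+u (n+1)%Z m * v (n+2)%Z (m+1)%Z)* v (n+2)%Z (m+1)%Z) by lra;
rewrite Er0, Er1, Es1, Es2 in *;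
clear -D0 D1 D2 G0 G1 G2 G3;
generalize dependent (u (n-1)%Z m); generalize dependent (u n m); generalize dependent (u (n+1)%Z m);
generalize dependent (v n (m+1)%Z); generalize dependent (v (n+1)%Z (m+1)%Z); generalize dependent (v (n+2)%Z (m+1)%Z);
generalize (IZR n);
intros;
split; auto_derive;
rewrite ?Rmult_0_l, ?Rplus_0_r, ?Rmult_1_l, ?Rmult_1_r; try assumption;
field; repeat split; try assumption; nz.

Theorem mainTheorem6 (alpha beta : R) (Hab : alpha <> beta) :
  nls_symmetry alpha beta sym_domain F1u F1v /\
  nls_ext_symmetry alpha beta sym_domain Mu Mv 1.
Proof.
  split.
  - intros u v Hs Hd n m. solve_all alpha beta u v Hs Hd n m.
  - intros u v Hs Hd n m. solve_all alpha beta u v Hs Hd n m.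
Qed.
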